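(* Let $z\in\mathcal F_\mathbb Z\setminus\{\Theta\}$, let $(q,r)$ be the lexicographically maximal FPF-visible inversion of $z$, and let $y=(q,r)z(q,r)$. Then $\hat\Psi^+(y,q)=\{z\}$.
   Context: Let $S_\mathbb Z$ be the group of finitely supported permutations of $\mathbb Z$. Let $\Theta(i)=i-(-1)^i$ and $\mathcal F_\mathbb Z=\{w^{-1}\Theta w:w\in S_\mathbb Z\}$. An FPF-visible inversion of $z$ is a pair $(i,j)\in\mathbb Z\times\mathbb Z$ with $i<j$ and $z(j)<\min\{i,z(i)\}$; every $z\ne\Theta$ has at least one, and there are finitely many. Let $\hat\ell_{\mathrm{FPF}}(z)=\frac12\#\{(i,j):i<j,\ z(i)>z(j),\ z(i)\ne j\}$. Define $\hat\Psi^+(y,q)=\{v\in\mathcal F_\mathbb Z:\hat\ell_{\mathrm{FPF}}(v)=\hat\ell_{\mathrm{FPF}}(y)+1,\ v=(q,j)y(q,j)\text{ for some integer }j>q\}$. *)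

(* Defs.v *)
From Stdlib Require Import ZArith List Lia.
Import ListNotations.
Open Scope Z_scope.

(* Theta(i) = i - (-1)^i : i-1 for even i, i+1 for odd i. *)
Definition Theta (i : Z) : Z := if Z.even i then i - 1 else i + 1.

Definition fin_perm (w winv : Z -> Z) : Prop :=
  (forall i, winv (w i) = i) /\ (forall i, w (winv i) = i) /\
  (exists N : Z, forall i, N < Z.abs i -> w i = i).

Definition in_FZ (z : Z -> Z) : Prop :=
  exists w winv, fin_perm w winv /\ forall i, z i = winv (Theta (w i)).

Definition transp (a b : Z) (i : Z) : Z :=
  if Z.eqb i a then b else if Z.eqb i b then a else i.

Definition conj_transp (a b : Z) (f : Z -> Z) : Z -> Z :=
  fun i => transp a b (f (transp a b i)).

(* pairs counted (twice) in \hat\ell_FPF *)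
Definition lfpf_pair (z : Z -> Z) (p : Z * Z) : Prop :=
  fst p < snd p /\ z (fst p) > z (snd p) /\ z (fst p) <> snd p.

(* twice_lfpf z k : the set {(i,j) : i<j, z i > z j, z i <> j} is finite with
   exactly k elements, i.e. 2 * \hat\ell_FPF(z) = k. *)
Definition twice_lfpf (z : Z -> Z) (k : nat) : Prop :=
  exists l : list (Z * Z), NoDup l /\ (forall p, In p l <-> lfpf_pair z p)
    /\ length l = k.

Definition fpf_visible (z : Z -> Z) (i j : Z) : Prop :=
  i < j /\ z j < Z.min i (z i).

Definition lex_le (p p' : Z * Z) : Prop :=
  fst p < fst p' \/ (fst p = fst p' /\ snd p <= snd p').

Definition lex_max_visible (z : Z -> Z) (q r : Z) : Prop :=
  fpf_visible z q r /\ forall i j, fpf_visible z i j -> lex_le (i, j) (q, r).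

Definition in_PsiHatPlus (y : Z -> Z) (q : Z) (v : Z -> Z) : Prop :=
  in_FZ v /\
  (exists k : nat, twice_lfpf y k /\ twice_lfpf v (k + 2)%nat) /\
  (exists j, q < j /\ v = conj_transp q j y).

(* Main.v *)
Require Import Defs.
From Stdlib Require Import ZArith List Lia Bool FunctionalExtensionality.
Import ListNotations.
Open Scope Z_scope.


Fixpoint zsum (l : list Z) (F : Z -> Z) : Z :=
  match l with [] => 0 | x :: l' => F x + zsum l' F end.

Lemma zsum_ext l F G : (forall x, In x l -> F x = G x) -> zsum l F = zsum l G.
Proof. induction l; simpl; intros H; auto. rewrite H, IHl; auto. Qed.

Lemma zsum_plus l F G : zsum l (fun x => F x + G x) = zsum l F + zsum l G.
Proof. induction l; simpl; lia. Qed.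

Lemma zsum_minus l F G : zsum l (fun x => F x - G x) = zsum l F - zsum l G.
Proof. induction l; simpl; lia. Qed.

Lemma zsum_scale l F c : zsum l (fun x => c * F x) = c * zsum l F.
Proof. induction l; simpl; lia. Qed.

Lemma zsum_nonneg l F : (forall x, In x l -> 0 <= F x) -> 0 <= zsum l F.
Proof. induction l; simpl; intros H; try lia.
  assert (0 <= zsum l F) by (apply IHl; auto). specialize (H a (or_introl eq_refl)). lia. Qed.

Lemma zsum_nonpos l F : (forall x, In x l -> F x <= 0) -> zsum l F <= 0.
Proof. induction l; simpl; intros H; try lia.
  assert (zsum l F <= 0) by (apply IHl; auto). specialize (H a (or_introl eq_refl)). lia. Qed.

Lemma zsum_ge_elem l F x : (forall y, In y l -> 0 <= F y) -> In x l -> F x <= zsum l F.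
Proof. induction l; simpl; intros H Hx; [contradiction|].
  destruct Hx as [->|Hx].
  - assert (0 <= zsum l F) by (apply zsum_nonneg; auto). lia.
  - assert (F x <= zsum l F) by (apply IHl; auto). specialize (H a (or_introl eq_refl)). lia.
Qed.

Lemma zsum_zero l F : (forall x, In x l -> F x = 0) -> zsum l F = 0.
Proof. intros H. rewrite (zsum_ext l F (fun _ => 0)) by auto. clear H. induction l; simpl; lia. Qed.

Lemma zsum_swap l1 l2 F :
  zsum l1 (fun i => zsum l2 (fun j => F i j)) = zsum l2 (fun j => zsum l1 (fun i => F i j)).
Proof.
  induction l1; simpl.
  - induction l2; simpl; lia.
  - rewrite IHl1. rewrite <- zsum_plus. reflexivity.
Qed.

Definition rm (x : Z) (l : list Z) := filter (fun y => negb (Z.eqb y x)) l.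

Lemma rm_In x y l : In y (rm x l) <-> In y l /\ y <> x.
Proof. unfold rm. rewrite filter_In. rewrite negb_true_iff, Z.eqb_neq. tauto. Qed.

Lemma rm_NoDup x l : NoDup l -> NoDup (rm x l).
Proof. apply NoDup_filter. Qed.

Lemma rm_notin x l : ~ In x l -> rm x l = l.
Proof. induction l; simpl; intros H; auto.
  destruct (Z.eqb_spec a x); [exfalso; auto|]. simpl. rewrite IHl; auto. Qed.

Lemma zsum_rm l F x : NoDup l -> In x l -> zsum l F = F x + zsum (rm x l) F.
Proof.
  induction l as [|a l IH]; simpl; intros Hn Hx; [contradiction|].
  inversion Hn; subst.
  destruct (Z.eqb_spec a x).
  - subst. simpl. rewrite rm_notin by auto. reflexivity.
  - simpl. destruct Hx as [Hx|Hx]; [congruence|]. rewrite (IH H2 Hx). lia.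
Qed.

Fixpoint zrange (s : Z) (n : nat) : list Z :=
  match n with O => [] | S n' => s :: zrange (s + 1) n' end.

Lemma zrange_In s n x : In x (zrange s n) <-> s <= x < s + Z.of_nat n.
Proof. revert s; induction n; intros s; simpl; [lia|].
  rewrite IHn. lia. Qed.

Lemma zrange_NoDup s n : NoDup (zrange s n).
Proof. revert s; induction n; intros s; simpl; constructor; auto.
  rewrite zrange_In. lia. Qed.

Definition inW (K x : Z) := -2*K-1 <= x <= 2*K.
Definition W (K : Z) := zrange (-2*K-1) (Z.to_nat (4*K+2)).

Lemma W_In K x : 0 <= K -> (In x (W K) <-> inW K x).
Proof. intros HK. unfold W, inW. rewrite zrange_In. rewrite Z2Nat.id by lia. lia. Qed.

Lemma W_NoDup K : NoDup (W K).
Proof. apply zrange_NoDup. Qed.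

Lemma zsum_transp l F a b : NoDup l -> In a l -> In b l -> a <> b ->
  zsum l (fun x => F (transp a b x)) = zsum l F.
Proof.
  intros Hn Ha Hb Hab.
  assert (Hb' : In b (rm a l)) by (apply rm_In; auto).
  rewrite (zsum_rm l _ a Hn Ha), (zsum_rm l F a Hn Ha).
  rewrite (zsum_rm (rm a l) _ b (rm_NoDup _ _ Hn) Hb').
  rewrite (zsum_rm (rm a l) F b (rm_NoDup _ _ Hn) Hb').
  rewrite (zsum_ext (rm b (rm a l)) (fun x => F (transp a b x)) F).
  - unfold transp. rewrite Z.eqb_refl. destruct (Z.eqb_spec b a); [congruence|].
    rewrite Z.eqb_refl. lia.
  - intros x Hx. apply rm_In in Hx as [Hx Hxb]. apply rm_In in Hx as [_ Hxa].
    unfold transp. destruct (Z.eqb_spec x a); [congruence|].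
    destruct (Z.eqb_spec x b); [congruence|]. reflexivity.
Qed.
Lemma Theta_cases i : (exists k, i = 2*k /\ Theta i = i - 1) \/ (exists k, i = 2*k+1 /\ Theta i = i + 1).
Proof.
  destruct (Z.Even_or_Odd i) as [[k Hk]|[k Hk]].
  - left. exists k. split; auto. unfold Theta. subst. rewrite Z.even_even. reflexivity.
  - right. exists k. split; auto. unfold Theta. subst.
    rewrite Z.add_comm, Z.even_add_mul_2. reflexivity.
Qed.


Lemma Theta_Theta i : Theta (Theta i) = i.
Proof.
  destruct (Theta_cases i) as [[k [Hk E]]|[k [Hk E]]]; rewrite E.
  - destruct (Theta_cases (i - 1)) as [[k' [Hk' E']]|[k' [Hk' E']]]; lia.
  - destruct (Theta_cases (i + 1)) as [[k' [Hk' E']]|[k' [Hk' E']]]; lia.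
Qed.

Lemma Theta_neq i : Theta i <> i.
Proof. destruct (Theta_cases i) as [[k [Hk E]]|[k [Hk E]]]; lia. Qed.

Definition good (f : Z -> Z) (M : Z) :=
  (forall i, f (f i) = i) /\ (forall i, f i <> i) /\ (forall i, M < Z.abs i -> f i = Theta i).

Lemma good_mono f M M' : good f M -> M <= M' -> good f M'.
Proof. intros [H1 [H2 H3]] HM. split; [|split]; auto. intros i Hi. apply H3. lia. Qed.

Lemma FZ_good z : in_FZ z -> exists M, good z M.
Proof.
  intros [w [winv [[Hwl [Hwr [N HN]]] Hz]]].
  exists (Z.abs N + 1). split; [|split].
  - intros i. rewrite !Hz. rewrite Hwr, Theta_Theta, Hwl. reflexivity.
  - intros i Hi. rewrite Hz in Hi. apply (f_equal w) in Hi. rewrite Hwr in Hi.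
    exact (Theta_neq _ Hi).
  - intros i Hi. rewrite Hz. rewrite (HN i) by lia.
    assert (N < Z.abs (Theta i)).
    { destruct (Theta_cases i) as [[k [Hk E]]|[k [Hk E]]]; rewrite E; lia. }
    rewrite <- (HN (Theta i)) at 1 by lia. apply Hwl.
Qed.
Section Win.
Variables (f : Z -> Z) (M K : Z).
Hypothesis (Hg : good f M) (HMK : M <= K) (HK : 0 <= K).

Lemma out_Theta x : ~ inW K x -> f x = Theta x /\ ~ inW K (Theta x).
Proof.
  destruct Hg as [_ [_ H3]]. unfold inW. intros Hx. split.
  - apply H3. lia.
  - destruct (Theta_cases x) as [[k [Hk E]]|[k [Hk E]]]; rewrite E; lia.
Qed.

Lemma in_in x : inW K x -> inW K (f x).
Proof.
  intros Hx. destruct (Hg) as [H1 _].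
  assert (D : inW K (f x) \/ ~ inW K (f x)) by (unfold inW; lia).
  destruct D as [D|D]; auto. exfalso.
  destruct (out_Theta (f x) D) as [E1 E2]. rewrite H1 in E1. rewrite <- E1 in E2. auto.
Qed.

Lemma supp i j : lfpf_pair f (i, j) -> inW K i /\ inW K j.
Proof.
  unfold lfpf_pair; simpl. intros [Hij [Hv Hne]].
  assert (TT : forall x y, x < y -> Theta y < Theta x -> Theta x <> y -> False).
  { intros x y Hxy. destruct (Theta_cases x) as [[k [Hk E]]|[k [Hk E]]];
    destruct (Theta_cases y) as [[k' [Hk' E']]|[k' [Hk' E']]]; rewrite E, E'; lia. }
  assert (Lo : forall x, x < -2*K-1 -> f x < -2*K-1 /\ f x = Theta x).
  { intros x Hx. destruct (out_Theta x) as [E1 E2]. unfold inW; lia.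
    rewrite E1. split; auto. unfold inW in E2.
    destruct (Theta_cases x) as [[k [Hk E]]|[k [Hk E]]]; rewrite E in *; lia. }
  assert (Hi : forall x, 2*K < x -> 2*K < f x /\ f x = Theta x).
  { intros x Hx. destruct (out_Theta x) as [E1 E2]. unfold inW; lia.
    rewrite E1. split; auto. unfold inW in E2.
    destruct (Theta_cases x) as [[k [Hk E]]|[k [Hk E]]]; rewrite E in *; lia. }
  assert (Ii : forall x, inW K x -> inW K (f x)) by exact in_in.
  unfold inW in *.
  assert (Di : i < -2*K-1 \/ 2*K < i \/ (-2*K-1 <= i <= 2*K)) by lia.
  assert (Dj : j < -2*K-1 \/ 2*K < j \/ (-2*K-1 <= j <= 2*K)) by lia.
  destruct Di as [Di|[Di|Di]]; destruct Dj as [Dj|[Dj|Dj]]; try (split; lia); exfalso.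
  all: try (destruct (Lo i ltac:(lia)) as [A1 A2]); try (destruct (Hi i ltac:(lia)) as [A1 A2]);
       try (destruct (Lo j ltac:(lia)) as [B1 B2]); try (destruct (Hi j ltac:(lia)) as [B1 B2]);
       try (pose proof (Ii i ltac:(lia))); try (pose proof (Ii j ltac:(lia))).
  all: first [lia | rewrite A2, B2 in *; exact (TT i j Hij ltac:(lia) Hne)].
Qed.
End Win.
Definition Lzb (f : Z -> Z) (i j : Z) : bool := (i <? j) && (f j <? f i) && negb (f i =? j).
Definition Lz f i j : Z := if Lzb f i j then 1 else 0.
Definition DS f l := zsum l (fun i => zsum l (fun j => Lz f i j)).

Lemma Lzb_spec f i j : Lzb f i j = true <-> lfpf_pair f (i, j).
Proof.
  unfold Lzb, lfpf_pair; simpl. rewrite !andb_true_iff, negb_true_iff, !Z.ltb_lt, Z.eqb_neq.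
  split; intros H; [destruct H as [[H1 H2] H3]|destruct H as [H1 [H2 H3]]]; repeat split; try lia; auto.
Qed.

Lemma count_map a l2 (g : Z * Z -> bool) :
  Z.of_nat (length (filter g (map (fun y => (a, y)) l2))) = zsum l2 (fun j => if g (a, j) then 1 else 0).
Proof. induction l2; simpl; auto. destruct (g (a, a0)); cbn [filter length]; rewrite ?Nat2Z.inj_succ, ?IHl2; lia. Qed.

Lemma count_prod l1 l2 (g : Z * Z -> bool) :
  Z.of_nat (length (filter g (list_prod l1 l2))) =
  zsum l1 (fun i => zsum l2 (fun j => if g (i, j) then 1 else 0)).
Proof.
  induction l1; simpl; auto.
  rewrite filter_app, length_app, Nat2Z.inj_add, IHl1, count_map. reflexivity.
Qed.

Lemma NoDup_map_pair (a : Z) (l : list Z) : NoDup l -> NoDup (map (fun y => (a, y)) l).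
Proof. induction 1; simpl; constructor; auto.
  rewrite in_map_iff. intros [y [E Hy]]. inversion E; subst; auto. Qed.

Lemma NoDup_prod (l1 l2 : list Z) : NoDup l1 -> NoDup l2 -> NoDup (list_prod l1 l2).
Proof.
  intros H1 H2. induction H1; simpl; [constructor|].
  apply NoDup_app; auto. apply NoDup_map_pair; auto.
  intros [u v] Hm Hp. apply in_map_iff in Hm as [y [E _]]. inversion E; subst.
  apply in_prod_iff in Hp as [Hp _]. auto.
Qed.

Lemma DS_nonneg f l : 0 <= DS f l.
Proof. unfold DS. apply zsum_nonneg; intros. apply zsum_nonneg; intros. unfold Lz.
  destruct Lzb; lia. Qed.

Lemma twice_DS f l : NoDup l -> (forall i j, lfpf_pair f (i, j) -> In i l /\ In j l) ->
  twice_lfpf f (Z.to_nat (DS f l)).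
Proof.
  intros Hn Hs. exists (filter (fun p => Lzb f (fst p) (snd p)) (list_prod l l)).
  split; [|split].
  - apply NoDup_filter, NoDup_prod; auto.
  - intros [i j]. rewrite filter_In, in_prod_iff. simpl. rewrite Lzb_spec.
    split; [tauto|]. intros H. split; auto.
  - apply Nat2Z.inj. rewrite count_prod. rewrite Z2Nat.id.
    + reflexivity.
    + apply DS_nonneg.
Qed.

Lemma twice_unique f k k' : twice_lfpf f k -> twice_lfpf f k' -> k = k'.
Proof.
  intros [l [Hn [Hi Hl]]] [l' [Hn' [Hi' Hl']]]. subst.
  apply Nat.le_antisymm; apply NoDup_incl_length; auto; intros p Hp.
  - apply Hi', Hi, Hp.
  - apply Hi, Hi', Hp.
Qed.
Definition E f i j := Lz f i j + Lz f j i.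
Definition Dd f a b i j := E (conj_transp a b f) (transp a b i) (transp a b j) - E f i j.
Definition sgn x := if 0 <? x then 1 else if x <? 0 then -1 else 0.

Ltac crush :=
  repeat (match goal with
   | |- context [Z.ltb ?x ?y] => destruct (Z.ltb_spec x y)
   | |- context [Z.eqb ?x ?y] => destruct (Z.eqb_spec x y)
   end; cbn [andb negb]; try (exfalso; lia)); try lia.

Lemma transp_a a b : transp a b a = b.
Proof. unfold transp. rewrite Z.eqb_refl. auto. Qed.
Lemma transp_b a b : transp a b b = a.
Proof. unfold transp. rewrite Z.eqb_refl. destruct (Z.eqb_spec b a); subst; auto. Qed.
Lemma transp_o a b x : x <> a -> x <> b -> transp a b x = x.
Proof. unfold transp. intros. destruct (Z.eqb_spec x a); [congruence|].
  destruct (Z.eqb_spec x b); [congruence|]. auto. Qed.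

Section Cl.
Variables (f : Z -> Z) (a b al be : Z).
Hypotheses (Ha : f a = al) (Hb : f b = be) (Hal : f al = a) (Hbe : f be = b)
  (Hab : a < b) (Hala : al < a) (Hbeb : be <> b) (Hbea : be <> a) (Halbe : al <> be).

Let f' := conj_transp a b f.
Lemma F'a : f' a = be. Proof. unfold f', conj_transp. rewrite transp_a, Hb, transp_o; lia. Qed.
Lemma F'b : f' b = al. Proof. unfold f', conj_transp. rewrite transp_b, Ha, transp_o; lia. Qed.
Lemma F'al : f' al = b. Proof. unfold f', conj_transp. rewrite (transp_o _ _ al), Hal, transp_a; lia. Qed.
Lemma F'be : f' be = a. Proof. unfold f', conj_transp. rewrite (transp_o _ _ be), Hbe, transp_b; lia. Qed.

Variables (j g : Z).
Hypotheses (Hj : f j = g)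
  (Hja : j <> a) (Hjb : j <> b) (Hjal : j <> al) (Hjbe : j <> be)
  (Hga : g <> a) (Hgb : g <> b) (Hgal : g <> al) (Hgbe : g <> be) (Hgj : g <> j).
Lemma F'j : f' j = g. Proof. unfold f', conj_transp. rewrite (transp_o _ _ j), Hj, transp_o; auto. Qed.

Ltac prep := unfold Dd, E, Lz, Lzb; fold f';
  rewrite ?transp_a, ?transp_b, ?(transp_o a b j), ?(transp_o a b al), ?(transp_o a b be) by lia;
  rewrite ?F'a, ?F'b, ?F'al, ?F'be, ?F'j, ?Ha, ?Hb, ?Hal, ?Hbe, ?Hj.

Lemma Dd_a : Dd f a b a j = if (a <? j) && (j <? b) then (if al <? g then 1 else -1) else 0.
Proof. prep. crush. Qed.
Lemma Dd_b : Dd f a b b j = if (a <? j) && (j <? b) then (if g <? be then 1 else -1) else 0.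
Proof. prep. crush. Qed.
Lemma Dd_al : Dd f a b al j = if (a <? g) && (g <? b) then (if al <? j then 1 else -1) else 0.
Proof. prep. crush. Qed.
Lemma Dd_be : Dd f a b be j = if (a <? g) && (g <? b) then (if j <? be then 1 else -1) else 0.
Proof. prep. crush. Qed.
End Cl.
Section KK.
Variables (f : Z -> Z) (a b al be : Z).
Hypotheses (Ha : f a = al) (Hb : f b = be) (Hal : f al = a) (Hbe : f be = b)
  (Hab : a < b) (Hala : al < a) (Hbeb : be <> b) (Hbea : be <> a) (Halbe : al <> be).

Definition S4 (G : Z -> Z) := G a + G b + G al + G be.

Lemma KK : S4 (fun i => S4 (fun k => Dd f a b i k)) =
  4 * sgn (be - al) + 4 * (if (a <? be) && (be <? b) then 1 else 0).
Proof.
  unfold S4, Dd, E, Lz, Lzb, sgn.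
  rewrite ?transp_a, ?transp_b, ?(transp_o a b al), ?(transp_o a b be) by lia.
  rewrite ?(F'a f a b al be), ?(F'b f a b al be), ?(F'al f a b al be), ?(F'be f a b al be) by first [assumption | lia].
  rewrite ?Ha, ?Hb, ?Hal, ?Hbe.
  crush.
Qed.
End KK.
Definition psi f a b x :=
  (if (a <? x) && (x <? b) then (if f a <? f x then 1 else -1) else 0) +
  (if (a <? x) && (x <? b) then (if f x <? f b then 1 else -1) else 0) +
  (if (a <? f x) && (f x <? b) then (if f a <? x then 1 else -1) else 0) +
  (if (a <? f x) && (f x <? b) then (if x <? f b then 1 else -1) else 0).

Lemma sumE h l : zsum l (fun i => zsum l (fun j => E h i j)) = 2 * DS h l.
Proof.
  unfold E, DS.
  rewrite (zsum_ext l _ (fun i => zsum l (fun j => Lz h i j) + zsum l (fun j => Lz h j i)))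
    by (intros; apply zsum_plus).
  rewrite zsum_plus. rewrite (zsum_swap l l (fun i j => Lz h j i)). lia.
Qed.

Lemma zsum_S4 l G a b al be : NoDup l -> In a l -> In b l -> In al l -> In be l ->
  a <> b -> a <> al -> a <> be -> b <> al -> b <> be -> al <> be ->
  zsum l G = G a + G b + G al + G be + zsum (rm be (rm al (rm b (rm a l)))) G.
Proof.
  intros Hn Ha Hb Hal Hbe H1 H2 H3 H4 H5 H6.
  rewrite (zsum_rm l G a Hn Ha).
  rewrite (zsum_rm (rm a l) G b (rm_NoDup _ _ Hn)) by (apply rm_In; auto).
  rewrite (zsum_rm (rm b (rm a l)) G al) by (apply rm_NoDup, rm_NoDup, Hn || (repeat rewrite rm_In; auto)).
  rewrite (zsum_rm (rm al (rm b (rm a l))) G be) by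
    (repeat apply rm_NoDup; auto; repeat rewrite rm_In; auto 10).
  lia.
Qed.

Lemma rm4_In l a b al be x : In x (rm be (rm al (rm b (rm a l)))) <->
  In x l /\ x <> a /\ x <> b /\ x <> al /\ x <> be.
Proof. rewrite !rm_In. tauto. Qed.
Lemma Dd_sym f a b i j : Dd f a b i j = Dd f a b j i.
Proof. unfold Dd, E. lia. Qed.

Lemma delta_formula f a b l :
  (forall i, f (f i) = i) -> (forall i, f i <> i) -> a < b -> f a < a ->
  NoDup l -> In a l -> In b l -> (forall x, In x l -> In (f x) l) ->
  DS (conj_transp a b f) l - DS f l =
  2 * sgn (f b - f a) + 2 * (if (a <? f b) && (f b <? b) then 1 else 0)
  + zsum (rm (f b) (rm (f a) (rm b (rm a l)))) (psi f a b).
Proof.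
  intros Hinv Hfpf Hab Hala Hn Ha Hb Hcl.
  remember (f a) as al eqn:Hfa. remember (f b) as be eqn:Hfb.
  assert (Hfal : f al = a) by (subst; auto).
  assert (Hfbe : f be = b) by (subst; auto).
  assert (Hbeb : be <> b) by (subst; auto).
  assert (Hbea : be <> a) by (intro E0; rewrite E0 in Hfbe; rewrite <- Hfa in Hfbe; lia).
  assert (Halbe : al <> be) by (intro E0; rewrite E0 in Hfal; lia).
  assert (Hall : In al l) by (subst; auto).
  assert (Hbel : In be l) by (subst; auto).
  set (l' := rm be (rm al (rm b (rm a l)))).
  set (t := transp a b). set (f' := conj_transp a b f).
  assert (E1 : 2 * (DS f' l - DS f l) =
     zsum l (fun i => zsum l (fun j => Dd f a b i j))).
  { rewrite Z.mul_sub_distr_l, <- !sumE.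
    rewrite <- (zsum_transp l (fun i => zsum l (fun j => E f' i j)) a b) by (auto; lia).
    rewrite (zsum_ext l (fun i => zsum l (fun j => E f' (transp a b i) j))
       (fun i => zsum l (fun j => E f' (transp a b i) (transp a b j)))).
    2:{ intros i _. symmetry. apply (zsum_transp l (fun j => E f' (transp a b i) j)); auto; lia. }
    rewrite <- zsum_minus. apply zsum_ext. intros i _. rewrite <- zsum_minus. reflexivity. }
  assert (Fo : forall x, x <> a -> x <> b -> x <> al -> x <> be -> f' x = f x).
  { intros x H1 H2 H3 H4. unfold f', conj_transp. rewrite (transp_o a b x) by auto.
    apply transp_o; intro E0.
    - apply H3. rewrite Hfa, <- E0, Hinv. auto.
    - apply H4. rewrite Hfb, <- E0, Hinv. auto. }
  assert (Dz : forall i j, In i l' -> In j l' -> Dd f a b i j = 0).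
  { intros i j Hi Hj. apply rm4_In in Hi. apply rm4_In in Hj.
    unfold Dd. rewrite (transp_o a b i), (transp_o a b j) by tauto.
    unfold E, Lz, Lzb. fold f'. rewrite (Fo i), (Fo j) by tauto. lia. }
  assert (Dp : forall j, In j l' -> Dd f a b a j + Dd f a b b j + Dd f a b al j + Dd f a b be j
                                   = psi f a b j).
  { intros j Hj. apply rm4_In in Hj as [_ [H1 [H2 [H3 H4]]]].
    assert (G1 : f j <> a) by (intro E0; apply H3; rewrite Hfa, <- E0, Hinv; auto).
    assert (G2 : f j <> b) by (intro E0; apply H4; rewrite Hfb, <- E0, Hinv; auto).
    assert (G3 : f j <> al) by (intro E0; apply H1; rewrite <- Hfal, <- E0, Hinv; auto).
    assert (G4 : f j <> be) by (intro E0; apply H2; rewrite <- Hfbe, <- E0, Hinv; auto).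
    assert (G5 : f j <> j) by auto.
    rewrite Dd_a with (f:=f) (a:=a) (b:=b) (al:=al) (be:=be) (j:=j) (g:=f j) by (auto; lia).
    rewrite Dd_b with (f:=f) (a:=a) (b:=b) (al:=al) (be:=be) (j:=j) (g:=f j) by (auto; lia).
    rewrite Dd_al with (f:=f) (a:=a) (b:=b) (al:=al) (be:=be) (j:=j) (g:=f j) by (auto; lia).
    rewrite Dd_be with (f:=f) (a:=a) (b:=b) (al:=al) (be:=be) (j:=j) (g:=f j) by (auto; lia).
    unfold psi. rewrite <- Hfa, <- Hfb. lia. }
  pose proof (KK f a b al be (eq_sym Hfa) (eq_sym Hfb) Hfal Hfbe Hab Hala Hbeb Hbea Halbe) as HKK.
  unfold S4 in HKK.
  assert (N1 : forall i, zsum l (fun j => Dd f a b i j) =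
     Dd f a b i a + Dd f a b i b + Dd f a b i al + Dd f a b i be + zsum l' (fun j => Dd f a b i j)).
  { intros i. apply zsum_S4; auto; lia. }
  rewrite (zsum_ext l _ _ (fun i _ => N1 i)) in E1.
  rewrite (zsum_S4 l _ a b al be) in E1 by (auto; lia).
  fold l' in E1.
  assert (N2 : zsum l' (fun i => Dd f a b i a + Dd f a b i b + Dd f a b i al + Dd f a b i be
                 + zsum l' (fun j => Dd f a b i j)) = zsum l' (psi f a b)).
  { apply zsum_ext. intros i Hi. rewrite (zsum_zero l' (fun j => Dd f a b i j)).
    - rewrite <- Dp by auto. rewrite !(Dd_sym f a b i). lia.
    - intros j Hj. apply Dz; auto. }
  assert (N3 : zsum l' (fun j => Dd f a b a j) + zsum l' (fun j => Dd f a b b j)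
     + zsum l' (fun j => Dd f a b al j) + zsum l' (fun j => Dd f a b be j) = zsum l' (psi f a b)).
  { rewrite <- (zsum_ext l' _ _ Dp). rewrite !zsum_plus. reflexivity. }
  rewrite N2 in E1. fold f'. lia.
Qed.
Lemma psi_nonneg f a b x : f a < f b -> 0 <= psi f a b x.
Proof. intros H. unfold psi. crush. Qed.
Lemma psi_nonpos f a b x : f b < f a -> psi f a b x <= 0.
Proof. intros H. unfold psi. crush. Qed.
Lemma psi_ge2 f a b x : f a < f b -> a < x < b -> f a < f x < f b -> 2 <= psi f a b x.
Proof. intros H1 H2 H3. unfold psi. crush. Qed.
Lemma psi_zero f a b x : f a < f b -> (a < x < b -> f x < f a) -> (a < f x < b -> x < f a) ->
  psi f a b x = 0.
Proof.
  intros H1 H2 H3. unfold psi.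
  destruct (Z.ltb_spec a x), (Z.ltb_spec x b), (Z.ltb_spec a (f x)), (Z.ltb_spec (f x) b);
  cbn [andb]; crush.
Qed.

Lemma transp_transp a b x : transp a b (transp a b x) = x.
Proof. unfold transp.
 destruct (Z.eqb_spec x a) as [->|Hxa].
 - destruct (Z.eqb_spec b a) as [->|Hba]; [reflexivity|]. rewrite Z.eqb_refl. reflexivity.
 - destruct (Z.eqb_spec x b) as [->|Hxb].
   + rewrite Z.eqb_refl. reflexivity.
   + destruct (Z.eqb_spec x a); [congruence|]. destruct (Z.eqb_spec x b); [congruence|]. reflexivity.
Qed.

Lemma good_conj f M a b : good f M ->
  good (conj_transp a b f) (Z.max M (Z.max (Z.abs a) (Z.abs b)) + 1).
Proof.
  intros [H1 [H2 H3]]. unfold conj_transp. split; [|split].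
  - intros i. rewrite transp_transp, H1, transp_transp. reflexivity.
  - intros i E0. apply (f_equal (transp a b)) in E0. rewrite transp_transp in E0.
    exact (H2 _ E0).
  - intros i Hi. rewrite (transp_o a b i) by lia. rewrite H3 by lia.
    apply transp_o; destruct (Theta_cases i) as [[k [Hk E0]]|[k [Hk E0]]]; rewrite E0; lia.
Qed.

Lemma twice_win f M K : good f M -> M <= K -> 0 <= K -> twice_lfpf f (Z.to_nat (DS f (W K))).
Proof.
  intros Hg HM HK. apply twice_DS. apply W_NoDup.
  intros i j H. rewrite !W_In by auto. apply (supp f M K); auto.
Qed.

Lemma W_closed f M K : good f M -> M <= K -> 0 <= K -> forall x, In x (W K) -> In (f x) (W K).
Proof. intros Hg HM HK x. rewrite !W_In by auto. apply (in_in f M K); auto. Qed.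
Lemma Kbound (M q r j : Z) :
  0 <= Z.abs M + Z.abs q + Z.abs r + Z.abs j + 3 /\
  Z.abs q <= Z.abs M + Z.abs q + Z.abs r + Z.abs j + 3 /\
  Z.abs r <= Z.abs M + Z.abs q + Z.abs r + Z.abs j + 3 /\
  Z.abs j <= Z.abs M + Z.abs q + Z.abs r + Z.abs j + 3 /\
  M <= Z.abs M + Z.abs q + Z.abs r + Z.abs j + 3 /\
  Z.max M (Z.max (Z.abs q) (Z.abs r)) + 1 <= Z.abs M + Z.abs q + Z.abs r + Z.abs j + 3 /\
  Z.max (Z.max M (Z.max (Z.abs q) (Z.abs r)) + 1) (Z.max (Z.abs q) (Z.abs j)) + 1
    <= Z.abs M + Z.abs q + Z.abs r + Z.abs j + 3.
Proof. lia. Qed.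

Lemma neq_cases (x y : Z) : x <> y -> x < y \/ y < x.
Proof. lia. Qed.

Lemma inW_of K x : 0 <= K -> Z.abs x <= K -> In x (W K).
Proof. intros. apply W_In; auto. unfold inW. lia. Qed.

Theorem lemma3p17 (z : Z -> Z) (q r : Z) :
  in_FZ z -> z <> Theta -> lex_max_visible z q r ->
  forall v : Z -> Z, in_PsiHatPlus (conj_transp q r z) q v <-> v = z.
Proof.
  intros Hz _ [Hvis Hmax] v.
  destruct (FZ_good z Hz) as [M Hg].
  pose proof Hg as [Hinv [Hfpf _]].
  assert (Hmax' : forall i j, fpf_visible z i j -> i < q \/ (i = q /\ j <= r)).
  { intros i j H. specialize (Hmax i j H). unfold lex_le in Hmax. simpl in Hmax. lia. }
  unfold fpf_visible in Hvis.
  remember (z r) as p eqn:Hp. remember (z q) as s eqn:Hs.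
  assert (Hzp : z p = r) by (subst; auto).
  assert (Hzs : z s = q) by (subst; auto).
  assert (Hqr : q < r) by lia. assert (Hpq : p < q) by lia. assert (Hps : p < s) by lia.
  assert (Hsq : s <> q) by (subst; auto).
  assert (Hsr : s <> r) by (intro E0; rewrite E0 in Hzs; lia).
  assert (Hpr : p <> r) by (subst; auto).
  assert (Hsnin : ~ (q < s < r)).
  { intros H. destruct (Hmax' s r) as [H1|H1]; [unfold fpf_visible; lia|lia|lia]. }
  assert (HE : forall e, q < e < r -> z e < p).
  { intros e He. destruct (Z.lt_ge_cases (z e) p) as [H|H]; auto.
    assert (z e <> p) by (intro E0; rewrite <- E0 in Hzp; rewrite Hinv in Hzp; lia).
    destruct (Hmax' e r) as [H1|H1]; [unfold fpf_visible; lia|lia|lia]. }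
  set (y := conj_transp q r z).
  assert (Yq : y q = p) by (unfold y, conj_transp; rewrite transp_a, <- Hp, transp_o; lia).
  assert (Yr : y r = s) by (unfold y, conj_transp; rewrite transp_b, <- Hs, transp_o; lia).
  assert (Yo : forall x, x <> q -> x <> r -> x <> p -> x <> s -> y x = z x).
  { intros x H1 H2 H3 H4. unfold y, conj_transp. rewrite (transp_o q r x) by auto.
    apply transp_o; intro E0.
    - apply H4. rewrite Hs, <- E0, Hinv. auto.
    - apply H3. rewrite Hp, <- E0, Hinv. auto. }
  assert (Ys : q < s -> y s = r).
  { intros H. unfold y, conj_transp. rewrite (transp_o q r s) by lia. rewrite Hzs, transp_a. auto. }
  pose proof (good_conj z M q r Hg) as Hgy. fold y in Hgy.
  set (My := Z.max M (Z.max (Z.abs q) (Z.abs r)) + 1) in Hgy.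
  pose proof Hgy as [Yinv [Yfpf _]].
  assert (yy : conj_transp q r y = z).
  { apply functional_extensionality. intros x. unfold y, conj_transp.
    rewrite !transp_transp. reflexivity. }
  split.
  - intros [_ [[k [Hk1 Hk2]] [j [Hj Hvj]]]]. subst v.
    destruct (Z.eq_dec j r) as [->|Hjr]; [exact yy|]. exfalso.
    pose proof (good_conj y My q j Hgy) as Hgv.
    set (Mv := Z.max My (Z.max (Z.abs q) (Z.abs j)) + 1) in Hgv.
    destruct (Kbound M q r j) as [HK [B1 [B2 [B3 [_ [HMy HMv]]]]]].
    set (K := Z.abs M + Z.abs q + Z.abs r + Z.abs j + 3) in *.
    fold My in HMy. fold My Mv in HMv.
    assert (Iq : In q (W K)) by (apply inW_of; auto).
    assert (Ij : In j (W K)) by (apply inW_of; auto).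
    assert (Ir : In r (W K)) by (apply inW_of; auto).
    clearbody K Mv My. clear B1 B2 B3.
    pose proof (twice_unique _ _ _ Hk1 (twice_win y My K Hgy HMy HK)) as Ek1.
    pose proof (twice_unique _ _ _ Hk2 (twice_win _ Mv K Hgv HMv HK)) as Ek2.
    pose proof (DS_nonneg y (W K)). pose proof (DS_nonneg (conj_transp q j y) (W K)).
    assert (Dv : DS (conj_transp q j y) (W K) = DS y (W K) + 2).
    { rewrite <- (Z2Nat.id (DS (conj_transp q j y) (W K))), <- (Z2Nat.id (DS y (W K))) by assumption.
      rewrite <- Ek2, <- Ek1. rewrite Nat2Z.inj_add. reflexivity. }
    clear Ek1 Ek2 Hk1 Hk2.
    pose proof (delta_formula y q j (W K)) as Hd.
    specialize (Hd Yinv). specialize (Hd Yfpf). specialize (Hd Hj).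
    assert (Hyq : y q < q) by (rewrite Yq; exact Hpq).
    specialize (Hd Hyq). specialize (Hd (W_NoDup K)). specialize (Hd Iq Ij).
    pose proof (W_closed y My K Hgy HMy HK) as Hcl.
    specialize (Hd Hcl).
    rewrite Dv, Yq in Hd.
    set (L := rm (y j) (rm p (rm j (rm q (W K))))) in Hd.
    assert (Hnn : p < y j -> 0 <= zsum L (psi y q j)).
    { intros Hpy. apply zsum_nonneg. intros x _. apply psi_nonneg. rewrite Yq. auto. }
    destruct (Z.eq_dec j s) as [Ejs|Ejs].
    + subst j. rewrite (Ys Hj) in Hd, Hnn.
      assert (r < s) by lia.
      specialize (Hnn ltac:(lia)).
      assert (Hs1 : sgn (r - p) = 1) by (unfold sgn; crush).
      assert (Hs2 : (if (q <? r) && (r <? s) then 1 else 0) = 1) by crush.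
      lia.
    + assert (Yj : y j = z j) by (apply Yo; lia).
      rewrite Yj in Hd, Hnn. fold L in Hd.
      assert (Hbp : z j <> p) by (intro E0; rewrite <- E0, Hinv in Hzp; lia).
      destruct (neq_cases (z j) p ltac:(assumption)) as [Hlt|Hgt]; [|destruct (neq_cases j r ltac:(assumption)) as [Hjr'|Hjr']].
      * assert (zsum L (psi y q j) <= 0).
        { apply zsum_nonpos. intros x _. apply psi_nonpos. rewrite Yq, Yj. auto. }
        assert (Hs1 : sgn (z j - p) = -1) by (unfold sgn; crush).
        assert (Hs2 : (if (q <? z j) && (z j <? j) then 1 else 0) = 0) by crush.
        lia.
      * destruct (Hmax' j r) as [H1|H1]; [unfold fpf_visible; lia|lia|lia].
      * specialize (Hnn Hgt).
        assert (Hs1 : sgn (z j - p) = 1) by (unfold sgn; crush).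
        rewrite Hs1 in Hd.
        assert (Hbs : z j <> s) by (intro E0; rewrite Hs in E0; apply (f_equal z) in E0;
                                    rewrite !Hinv in E0; lia).
        destruct (neq_cases (z j) s ltac:(assumption)) as [Hls|Hgs].
        -- assert (Hbq : z j <> q) by (intro E0; apply Ejs; rewrite Hs, <- E0, Hinv; auto).
           assert (Hbj : z j <> j) by auto.
           destruct (neq_cases (z j) q ltac:(assumption)) as [H1|H1].
           ++ destruct (Hmax' q j) as [H2|H2]; [unfold fpf_visible; lia|lia|lia].
           ++ destruct (neq_cases (z j) j ltac:(assumption)) as [H2|H2].
              ** assert (Hs2 : (if (q <? z j) && (z j <? j) then 1 else 0) = 1) by crush. lia.
              ** destruct (Hmax' j s) as [H3|H3]; [unfold fpf_visible; lia|lia|lia].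
        -- assert (Hr : In r L).
           { unfold L. rewrite rm4_In. split; [exact Ir|].
             repeat split; try lia. intro E0. rewrite Yj in E0. apply (f_equal z) in E0. rewrite Hinv, <- Hp in E0. lia. }
           assert (psi y q j r <= zsum L (psi y q j)).
           { apply zsum_ge_elem; auto. intros x _. apply psi_nonneg. rewrite Yq, Yj. auto. }
           assert (2 <= psi y q j r) by (apply psi_ge2; rewrite ?Yq, ?Yj, ?Yr; lia).
           assert (0 <= (if (q <? z j) && (z j <? j) then 1 else 0)) by crush.
           lia.
  - intros ->. split; [exact Hz|]. split.
    2:{ exists r. split; auto. }
    destruct (Kbound M q r r) as [HK [B1 [B2 [_ [HMK [HMy _]]]]]].
    set (K := Z.abs M + Z.abs q + Z.abs r + Z.abs r + 3) in *.
    fold My in HMy.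
    assert (Iq : In q (W K)) by (apply inW_of; auto).
    assert (Ir : In r (W K)) by (apply inW_of; auto).
    clearbody K My. clear B1 B2.
    exists (Z.to_nat (DS y (W K))). split.
    + apply (twice_win y My K); auto.
    + assert (Hd := delta_formula y q r (W K) Yinv Yfpf Hqr ltac:(rewrite Yq; exact Hpq) (W_NoDup K)
         Iq Ir (W_closed y My K Hgy HMy HK)).
      rewrite yy, Yq, Yr in Hd.
      rewrite zsum_zero in Hd.
      2:{ intros x Hx. apply rm4_In in Hx as [_ [H1 [H2 [H3 H4]]]].
          apply psi_zero; rewrite ?Yq, ?Yr; auto.
          - rewrite Yo by auto. intros Hx. apply HE; auto.
          - rewrite Yo by auto. intros Hx.
            assert (z x <> q) by (intro E0; apply H4; rewrite Hs, <- E0, Hinv; auto).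
            assert (z x <> r) by (intro E0; apply H3; rewrite Hp, <- E0, Hinv; auto).
            assert (z x <> p) by (intro E0; apply H2; rewrite <- Hzp, <- E0, Hinv; auto).
            assert (z x <> s) by (intro E0; apply H1; rewrite <- Hzs, <- E0, Hinv; auto).
            specialize (HE (z x) Hx). rewrite Hinv in HE. auto. }
      assert (Hs1 : sgn (s - p) = 1) by (unfold sgn; crush).
      assert (Hs2 : (if (q <? s) && (s <? r) then 1 else 0) = 0) by crush.
      rewrite Hs1, Hs2 in Hd.
      pose proof (twice_win z M K Hg HMK HK) as Tz.
      replace (Z.to_nat (DS z (W K))) with (Z.to_nat (DS y (W K)) + 2)%nat in Tz; auto.
      pose proof (DS_nonneg y (W K)). lia.
Qed.
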